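(* Let $\pi$ be a permutation of $V=\{1,\dots,n\}$ and $s\in\mathbb{N}$. Let $T$ be a uniformly random transposition on $V$. Then the probability that some cycle of $\pi$ is split in $T\circ\pi$ into two cycles at least one of which has length at most $s$ is at most $2s/(n-1)$.
   Context: A transposition $T=(x,y)$ is uniformly chosen among all transpositions of $V$. If $x$ and $y$ lie in the same cycle of $\pi$, then that cycle is split in $T\circ\pi$ into two cycles; otherwise two cycles are joined. *)

(* Defs.v *)
From HB Require Import structures.
From mathcomp Require Import all_boot all_order all_algebra all_fingroup.
Set Implicit Arguments. Unset Strict Implicit. Unset Printing Implicit Defensive.
Import Order.TTheory GRing.Theory Num.Theory.

(* A transposition T = (x y) is represented by the unordered pair
   {x, y}, encoded as the ordered pair (x, y) with x < y; there are 'C(n,2)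
   of them and the uniform distribution gives each weight 1 / 'C(n,2).     *)
Definition transpositions (n : nat) : {set 'I_n * 'I_n} :=
  [set p : 'I_n * 'I_n | (p.1 < p.2)%N].

(* T o pi : first apply pi, then T.  In mathcomp, (s * t) x = t (s x). *)
Definition compT (n : nat) (pi : {perm 'I_n}) (x y : 'I_n) : {perm 'I_n} :=
  (pi * tperm x y)%g.

(* The event: x and y lie in the same cycle of pi (so that cycle is split in
   T o pi into two cycles, namely the cycles of x and of y in T o pi), and at
   least one of these two resulting cycles has length at most s. *)
Definition split_small (n : nat) (pi : {perm 'I_n}) (s : nat) (x y : 'I_n) : bool :=
  (y \in porbit pi x) &&
  ((#|porbit (compT pi x y) x| <= s)%N || (#|porbit (compT pi x y) y| <= s)%N).

Definition split_small_prob (n : nat) (pi : {perm 'I_n}) (s : nat) : rat :=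
  (#|[set p in transpositions n | split_small pi s p.1 p.2]|%:R
     / #|transpositions n|%:R)%R.

(* Main.v *)
Require Import Defs.
From HB Require Import structures.
From mathcomp Require Import all_boot all_order all_algebra all_fingroup.
From mathcomp Require Import zify.
Import Order.TTheory GRing.Theory Num.Theory.
Local Open Scope ring_scope.

Lemma key (T : finType) (pi : {perm T}) (x y : T) :
  y \in porbit pi x -> x != y ->
  (pi ^+ #|porbit (pi * tperm x y)%g x|)%g x = y.
Proof.
move=> Hy Hxy.
have ex: exists k, (0 < k)%N && (iter k pi x == y).
  case/porbitP: Hy => i Ei; exists i; rewrite -permX -Ei eqxx andbT lt0n.
  apply: contra Hxy => /eqP i0; by rewrite Ei i0 expg0 perm1.
case: (ex_minnP ex) => k /andP[k0 /eqP ek] kmin.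
set sg := (pi * tperm x y)%g.
have neq: forall j, (0 < j < k)%N -> (iter j pi x != y) && (iter j pi x != x).
  move=> j /andP[j0 jk]; apply/andP; split.
    apply/negP => /eqP E; have := kmin j; rewrite j0 E eqxx => /(_ isT).
    by rewrite leqNgt jk.
  apply/negP => /eqP E.
  have : (k <= k - j)%N.
    apply: kmin; rewrite subn_gt0 jk /=.
    by rewrite -{1}E -iterD subnK ?ek // ltnW.
  lia.
have sig: forall j, (j < k)%N -> iter j sg x = iter j pi x.
  elim=> [//|j IH] jk.
  rewrite iterS IH ?(ltnW jk) // /sg permM -iterS.
  have /andP[n1 n2] := neq j.+1 jk.
  by rewrite tpermD // eq_sym.
have sk: iter k sg x = x.
  case: k k0 ek kmin neq sig => [//|k] _ ek _ _ sig.
  by rewrite iterS sig // /sg permM -iterS ek tpermR.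
suff ->: #|porbit sg x| = k by rewrite permX.
set m := #|porbit sg x|.
have m0 : (0 < m)%N by rewrite lt0n card_porbit_neq0.
have im : iter m sg x = x by apply: iter_porbit.
have U := uniq_traject_porbit sg x; rewrite -/m in U.
case: (ltngtP m k) => // H.
- have := neq m; rewrite m0 H => /(_ isT) /andP[_].
  by rewrite -sig // im eqxx.
- have := nth_uniq x (_ : (0 < size (traject sg x m))%N) (_ : (k < size (traject sg x m))%N) U.
  rewrite size_traject => /(_ m0 H).
  rewrite !nth_traject // sk /= eqxx => /esym /eqP; lia.
Qed.

Lemma card_trans (n : nat) : (#|transpositions n| * 2 = n * n.-1)%N.
Proof.
set T := transpositions n.
pose sw := fun p : 'I_n * 'I_n => (p.2, p.1).
have swinj : injective sw by case=> a b [c d] [-> ->].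
set D := [set p : 'I_n * 'I_n | p.1 != p.2].
have HD : D = T :|: sw @: T.
  apply/setP => -[a b]; rewrite !inE /=; apply/idP/idP.
    rewrite neq_ltn => /orP[-> //|ba]; apply/orP; right.
    by apply/imsetP; exists (b, a); rewrite // inE.
  case/orP => [ab|/imsetP[[c d]]]; first by rewrite neq_ltn ab.
  by rewrite inE /= => cd [-> ->]; rewrite neq_ltn cd orbT.
have Hdisj : T :&: sw @: T = set0.
  apply/setP => -[a b]; rewrite !inE /=; apply/negP => /andP[ab /imsetP[[c d]]].
  rewrite inE /= => cd [E1 E2]; subst; lia.
have cD : #|D| = (#|T| + #|T|)%N.
  by rewrite HD cardsU Hdisj cards0 subn0 card_imset.
have cC : #|~: D| = n.
  have -> : ~: D = (fun a => (a, a)) @: [set: 'I_n].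
    apply/setP => -[a b]; rewrite !inE /= negbK; apply/eqP/imsetP.
      by move=> E; exists b; rewrite ?inE ?E.
    by case=> c _ [-> ->].
  rewrite card_imset; last by move=> a b [].
  by rewrite cardsE card_ord.
have := cardsC D; rewrite card_prod card_ord cD cC.
move=> E; rewrite -subn1 mulnBr muln1; lia.
Qed.

Theorem lemma2p1 (n : nat) (pi : {perm 'I_n}) (s : nat) (hn : (2 <= n)%N) :
  split_small_prob pi s <= (2 * s)%:R / (n - 1)%:R.
Proof.
set B := [set p in transpositions n | split_small pi s p.1 p.2].
pose g := fun p : 'I_n * 'I_n =>
  if (#|porbit (compT pi p.1 p.2) p.1| <= s)%N then p else (p.2, p.1).
pose f := fun q : 'I_n * 'I_s => (q.1, (pi ^+ (q.2).+1)%g q.1).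
have cB : (#|B| <= n * s)%N.
  have -> : #|B| = #|g @: B|.
    apply/esym/card_in_imset => -[a b] [c d]; rewrite !inE /g /= => /andP[ab _] /andP[cd _].
    by case: ifP => _; case: ifP => _ [E1 E2]; subst => //; lia.
  apply: (@leq_trans #|f @: [set: 'I_n * 'I_s]|); last first.
    by rewrite (leq_trans (leq_imset_card _ _)) // cardsT card_prod !card_ord.
  apply/subset_leq_card/subsetP => _ /imsetP[[x y] + ->].
  rewrite !inE /split_small /g /= => /andP[xy /andP[Hy Hs]].
  have xy' : x != y by rewrite neq_ltn xy.
  case: ifP => H.
    set k := #|_| in H.
    have k0 : (0 < k)%N by rewrite lt0n card_porbit_neq0.
    have ks : (k.-1 < s)%N by lia.
    apply/imsetP; exists (x, Ordinal ks); rewrite ?inE //=.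
    by rewrite /f /= prednK // key.
  rewrite H /= in Hs.
  set k := #|_| in Hs.
  have k0 : (0 < k)%N by rewrite lt0n card_porbit_neq0.
  have ks : (k.-1 < s)%N by lia.
  apply/imsetP; exists (y, Ordinal ks); rewrite ?inE //=.
  rewrite /f /= prednK // /k /compT tpermC key //; first by rewrite porbit_sym.
  by rewrite eq_sym.
have cT := card_trans n.
have T0 : (0 < #|transpositions n|)%N by lia.
rewrite /split_small_prob -/B ler_pdivrMr ?ltr0n // mulrAC ler_pdivlMr ?ltr0n ?subn_gt0 //.
rewrite -!natrM ler_nat.
have : (#|B| * (n - 1) <= n * s * (n - 1))%N by rewrite leq_mul2r cB orbT.
rewrite -subn1 in cT.
nia.
Qed.
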